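(* Let $d\ge0$ and let $a,b,c$ be nonnegative integers such that $s=a+b+c-d$ is positive. Then in $S_{\mathbb{Z}}(2,d)$ the following identities hold: $$f^{(a)}\binom{H_2}{b}e^{(c)}=\sum_{k=s}^{\min(a,c)}(-1)^{k-s}\binom{k-1}{s-1}\binom{b+k}{k}f^{(a-k)}\binom{H_2}{b+k}e^{(c-k)},$$ $$e^{(a)}\binom{H_1}{b}f^{(c)}=\sum_{k=s}^{\min(a,c)}(-1)^{k-s}\binom{k-1}{s-1}\binom{b+k}{k}e^{(a-k)}\binom{H_1}{b+k}f^{(c-k)}$$ (an empty sum being $0$).
   Context: Let $E=\mathbb{Q}^2$ with standard basis $e_1,e_2$, $E_{\mathbb{Z}}=\mathbb{Z}e_1\oplus\mathbb{Z}e_2$. Let $\rho_d:U(\mathfrak{gl}_2)\to\mathrm{End}_{\mathbb{Q}}(E^{\otimes d})$ be the representation in which $x\in\mathfrak{gl}_2$ acts as $\sum_{i=1}^d 1\otimes\cdots\otimes x\otimes\cdots\otimes 1$; its image is the Schur algebra $S_{\mathbb{Q}}(2,d)$. The integral Schur algebra $S_{\mathbb{Z}}(2,d)=\mathrm{End}_{\mathbb{Z}\Sigma_d}(E_{\mathbb{Z}}^{\otimes d})$ is regarded as a subring of $S_{\mathbb{Q}}(2,d)$. Write $e,f,H_1,H_2$ for the images under $\rho_d$ of the matrix units $e_{12},e_{21},e_{11},e_{22}$. For an element $T$ and integer $m\ge0$, $T^{(m)}=T^m/m!$ and $\binom{T}{m}=T(T-1)\cdots(T-m+1)/m!$; both are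 defined to be $0$ for negative $m$. *)

(* Defs.v *)
From HB Require Import structures.
From mathcomp Require Import all_boot all_order all_algebra.
Set Implicit Arguments. Unset Strict Implicit. Unset Printing Implicit Defensive.
Import Order.TTheory GRing.Theory Num.Theory.
Local Open Scope ring_scope.

(* Basis of E^{(x)d}: words w : 'I_d -> 'I_2, w standing for
   e_{w 0 + 1} (x) ... (x) e_{w (d-1) + 1}  (index 0 <-> e_1, 1 <-> e_2). *)
Definition word (d : nat) := {ffun 'I_d -> 'I_2}.

Definition tdim (d : nat) : nat := #|word d|.

(* Endomorphisms of E^{(x)d} as matrices w.r.t. the tensor basis, column
   convention: M i j = coefficient of basis vector i in M (basis vector j). *)
Definition endo (d : nat) := 'M[rat]_(tdim d).

(* rho_d(x) = sum_j 1 (x) .. (x) x (in slot j) (x) .. (x) 1 *)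
Definition rho (d : nat) (x : 'M[rat]_2) : endo d :=
  \matrix_(i, j)
    \sum_(k < d)
      (x (@enum_val (word d) predT i k) (@enum_val (word d) predT j k) *
       ([forall l : 'I_d, (l != k) ==>
           (@enum_val (word d) predT i l == @enum_val (word d) predT j l)])%:R).

Definition eop (d : nat) : endo d := rho d (delta_mx 0 1).
Definition fop (d : nat) : endo d := rho d (delta_mx 1 0).
Definition H1op (d : nat) : endo d := rho d (delta_mx 0 0).
Definition H2op (d : nat) : endo d := rho d (delta_mx 1 1).

Definition divpow (d : nat) (T : endo d) (m : nat) : endo d :=
  (m`!%:R : rat)^-1 *: T ^+ m.

Definition binomT (d : nat) (T : endo d) (m : nat) : endo d :=
  (m`!%:R : rat)^-1 *: \prod_(i < m) (T - i%:R).

(* Main.v *)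
Require Import Defs.
From HB Require Import structures.
From mathcomp Require Import all_boot all_order all_algebra.
From mathcomp Require Import ring lra zify.
Set Implicit Arguments. Unset Strict Implicit. Unset Printing Implicit Defensive.
Import Order.TTheory GRing.Theory Num.Theory.
Local Open Scope ring_scope.

Lemma binM (j i r : nat) : (r <= i)%N -> ('C(j, i) * 'C(i, r) = 'C(j, r) * 'C(j - r, i - r))%N.
Proof.
move=> ri; have [ij|ji] := leqP i j; last first.
  rewrite bin_small // mul0n; have [rj|jr] := leqP r j.
    by rewrite (@bin_small (j - r)) ?muln0 //; lia.
  by rewrite bin_small.
have rj : (r <= j)%N by lia.
have h1 := bin_fact ij; have h2 := bin_fact ri; have h3 := bin_fact rj.
have h4 := @bin_fact (j - r) (i - r) (leq_sub2r r ij).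
have e : (j - r - (i - r) = j - i)%N by lia.
rewrite e in h4.
have K : (0 < r`! * (i - r)`! * (j - i)`!)%N by rewrite !muln_gt0 !fact_gt0.
apply/eqP; rewrite -(eqn_pmul2r K); apply/eqP.
transitivity ('C(j, i) * (j - i)`! * ('C(i, r) * (r`! * (i - r)`!)))%N; first by ring.
rewrite h2.
transitivity ('C(j, i) * (i`! * (j - i)`!))%N; first by ring.
rewrite h1 -h3.
transitivity ('C(j, r) * r`! * ('C(j - r, i - r) * ((i - r)`! * (j - i)`!)))%N; last by ring.
by rewrite h4 mulnA.
Qed.

Lemma BINM (n k b m : nat) :
  ('C(n + k, b + k) * 'C(m, n + k) * 'C(b + k, k) = 'C(n, b) * 'C(m, n) * 'C(m - n, k))%N.
Proof.
have e1 := @binM (n + k) (b + k) k (leq_addl _ _).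
rewrite !addnK in e1.
have e2 := @binM m (n + k) n (leq_addr _ _).
rewrite addKn in e2.
have e3 : 'C(n + k, k) = 'C(n + k, n).
  by rewrite -bin_sub ?leq_addl // addnK.
transitivity (('C(n + k, b + k) * 'C(b + k, k)) * 'C(m, n + k))%N; first by ring.
rewrite e1 e3.
transitivity ('C(n, b) * ('C(m, n + k) * 'C(n + k, n)))%N; first by ring.
by rewrite e2; ring.
Qed.

Lemma alt_sum (n : nat) : \sum_(i < n.+1) ((-1) ^+ i * 'C(n, i)%:R : rat) = (n == 0)%:R.
Proof.
have := exprDn 1 (-1 : rat) n.
rewrite subrr expr0n => ->; apply: eq_bigr => i _.
by rewrite expr1n mul1r mulr_natr.
Qed.

Lemma sgn2 (i r : nat) : (-1 : rat) ^+ (i + r + r) = (-1) ^+ i.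
Proof. by rewrite -addnA addnn -mul2n exprD exprM sqrrN !expr1n mulr1. Qed.

Lemma Dsum (j r : nat) :
  \sum_(0 <= i < j.+1) ((-1) ^+ (i + r) * 'C(i, r)%:R * 'C(j, i)%:R : rat) = (j == r)%:R.
Proof.
have [rj|jr] := leqP r j; last first.
  rewrite big1_seq; first by rewrite (ltn_eqF jr).
  move=> i; rewrite mem_index_iota => /andP[_ hi].
  by rewrite bin_small ?mulr0 ?mul0r //; lia.
rewrite (big_cat_nat (n := r)) //= ?leqW //.
rewrite big1_seq ?add0r; last first.
  by move=> i; rewrite mem_index_iota => /andP[_ hi]; rewrite bin_small ?mulr0 ?mul0r.
rewrite -{1}(add0n r) big_addn.
have -> : (j.+1 - r = (j - r).+1)%N by lia.
under eq_bigr => i _.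
  rewrite -mulrA -natrM mulnC binM ?leq_addl // addnK natrM mulrCA.
  rewrite sgn2.
  over.
rewrite -big_distrr /= big_mkord alt_sum.
rewrite subn_eq0; have [->|ne] := eqVneq j r; first by rewrite binn leqnn mulr1.
by rewrite (_ : (j <= r)%N = false) ?mulr0 //; lia.
Qed.

Definition Tsum (s j : nat) : rat :=
  \sum_(s <= k < j.+1) ((-1) ^+ (k + s) * 'C(k.-1, s.-1)%:R * 'C(j, k)%:R).

Lemma Tsum1 (t s : nat) : (0 < s)%N -> Tsum s (s + t) = 1.
Proof.
elim: t s => [|t IH] s s0.
  rewrite /Tsum addn0 big_nat1 !binn !mulr1.
  by have := sgn2 0 s; rewrite add0n expr0.
have hsplit : Tsum s (s + t.+1) =
  \sum_(s <= k < (s + t.+1).+1) ((-1) ^+ (k + s) * 'C(k, s)%:R * 'C(s + t.+1, k)%:R) -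
  \sum_(s <= k < (s + t.+1).+1) ((-1) ^+ (k + s) * 'C(k.-1, s)%:R * 'C(s + t.+1, k)%:R).
  rewrite /Tsum -sumrB; apply: eq_big_nat => k /andP[sk _].
  case: k sk => [|k] sk; first by move: s0; lia.
  case: s s0 sk IH => [|s] // _ sk _.
  by rewrite binS natrD /= -mulrBl -mulrBr addrAC subrr add0r.
rewrite hsplit.
have -> : \sum_(s <= k < (s + t.+1).+1) ((-1) ^+ (k + s) * 'C(k, s)%:R * 'C(s + t.+1, k)%:R : rat) = 0.
  have hD := Dsum (s + t.+1) s.
  transitivity (((s + t.+1) == s)%:R : rat); last by rewrite (_ : (s + t.+1 == s) = false) //; lia.
  rewrite -hD [RHS](big_cat_nat (n := s)) //= ?leq0n; last by lia.
  rewrite [X in _ = X + _]big1_seq ?add0r //.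
  by move=> i; rewrite mem_index_iota => /andP[_ hi]; rewrite bin_small ?mulr0 ?mul0r.
rewrite big_ltn; last by lia.
rewrite bin_small ?mulr0 ?mul0r ?add0r; last by case: s s0 {IH hsplit}.
transitivity (Tsum s.+1 (s.+1 + t)); last exact: IH.
rewrite addSnnS /Tsum -sumrN; apply: eq_bigr => k _.
by rewrite (addnS k s) exprS /= !mulN1r !mulNr.
Qed.

Definition Gc (U Wn m a b c : nat) : rat :=
  if ((a <= U) && (U - a + c == Wn))%N then ('C(U - a, b) * 'C(m, U - a))%:R else 0.

Lemma arith (d U Wn m a b c : nat) : (m <= U)%N -> (m <= Wn)%N -> (U + Wn <= d + m)%N ->
  (0 < a + b + c - d)%N ->
  Gc U Wn m a b c =
  \sum_((a + b + c - d)%N <= k < (minn a c).+1)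
     (((-1) ^+ (k - (a + b + c - d)) * ('C(k.-1, (a + b + c - d).-1))%:R
        * ('C(b + k, k))%:R : rat) * Gc U Wn m (a - k) (b + k) (c - k)).
Proof.
set s := (a + b + c - d)%N => hmU hmW hUW hs.
rewrite {1}/Gc; case: ifP => [/andP[ha /eqP hc] | hn]; last first.
  rewrite big1_seq // => k /andP[_]; rewrite mem_index_iota => /andP[sk kmin].
  rewrite /Gc; case: ifP => [/andP[h1 /eqP h2]|]; last by rewrite mulr0.
  have [aU|Ua] := leqP a U.
    move/negbT: hn; rewrite aU /=; move: kmin h2; rewrite /minn; case: ifP; lia.
  by rewrite (@bin_small (U - (a - k))) ?mul0n ?mulr0 //; move: kmin Ua; rewrite /minn; case: ifP; lia.
set n := (U - a)%N.
have hmin1 : (minn a c <= a)%N := geq_minl a c.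
have hmin2 : (minn a c <= c)%N := geq_minr a c.
rewrite (eq_big_nat _ _ (F2 := fun k => ('C(n, b) * 'C(m, n))%:R *
    ((-1) ^+ (k - s) * 'C(k.-1, s.-1)%:R * 'C(m - n, k)%:R))); last first.
  move=> k /andP[sk kmin].
  have kmin' : (k <= minn a c)%N by [].
  rewrite /Gc.
  have -> : ((a - k <= U) && (U - (a - k) + (c - k) == Wn))%N = true.
    apply/andP; split; [lia | apply/eqP; lia].
  have -> : (U - (a - k) = n + k)%N by rewrite /n; lia.
  transitivity ((-1) ^+ (k - s) * 'C(k.-1, s.-1)%:R *
     ('C(n + k, b + k) * 'C(m, n + k) * 'C(b + k, k))%N%:R : rat).
    by rewrite !natrM; ring.
  by rewrite BINM !natrM; ring.
rewrite -big_distrr /=.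
have [->|nz] := eqVneq ('C(n, b) * 'C(m, n))%N 0%N; first by rewrite mul0r.
have [bn nm] : (b <= n)%N /\ (n <= m)%N.
  by move: nz; rewrite muln_eq0 negb_or -!lt0n !bin_gt0 => /andP[].
set j := (m - n)%N.
have sj : (s <= j)%N by rewrite /s /j /n; lia.
have jmin : (j <= minn a c)%N by rewrite /j /n leq_min; apply/andP; split; lia.
rewrite (big_cat_nat (n := j.+1)) /=; try lia.
rewrite [X in _ = _ * (_ + X)]big1_seq ?addr0; last first.
  move=> k /andP[_]; rewrite mem_index_iota => /andP[jk _].
  by rewrite (@bin_small j k) ?mulr0.
have := Tsum1 (j - s) hs; rewrite subnKC // => e.
suff -> : \sum_(s <= i < j.+1) ((-1) ^+ (i - s) * 'C(i.-1, s.-1)%:R * 'C(j, i)%:R : rat) = 1 by rewrite mulr1.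
transitivity (Tsum s j); last exact: e.
apply: eq_big_nat => k /andP[sk _].
by rewrite -(sgn2 (k - s) s) subnK.
Qed.

Section S.
Variable d : nat.
Local Notation W := (word d).
Definition er (u : W) : 'I_(tdim d) := enum_rank u.
Definition Kw (M : endo d) (u w : W) : rat := M (er u) (er w).

Lemma ev_er (u : W) : @enum_val W predT (er u) = u.
Proof. by rewrite /er enum_rankK. Qed.

Lemma Kw_mul (M N : endo d) u w : Kw (M * N) u w = \sum_(v : W) Kw M u v * Kw N v w.
Proof.
rewrite /Kw mxE (reindex er) //=; apply: onW_bij; exact: enum_rank_bij.
Qed.

Lemma Kw1 u w : Kw 1 u w = (u == w)%:R.
Proof. rewrite /Kw mxE. by rewrite (inj_eq (@enum_rank_inj _)). Qed.

Lemma Kw_rho x u w : Kw (rho d x) u w = \sum_(k < d) (x (u k) (w k) * ([forall l : 'I_d, (l != k) ==> (u l == w l)])%:R).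
Proof. by rewrite /Kw /rho mxE !ev_er. Qed.

Definition S (j : 'I_2) (w : W) : {set 'I_d} := [set k | w k == j].
Definition upd (u : W) (k : 'I_d) (j : 'I_2) : W := [ffun l => if l == k then j else u l].

Lemma I2_neq (i j z : 'I_2) : i != j -> (z != j) = (z == i).
Proof. by case: i j z => [[|[|]]] // ? [[|[|]]] // ? [[|[|]]]. Qed.

Lemma sum_delta (T : finType) (x : T) (F : T -> rat) :
  \sum_(v : T) (v == x)%:R * F v = F x.
Proof.
rewrite (bigD1 x) //= eqxx mul1r big1 ?addr0 // => v /negbTE ->; by rewrite mul0r.
Qed.

Lemma agree_upd (u v : W) k j :
  ([forall l : 'I_d, (l != k) ==> (u l == v l)] && (v k == j)) = (v == upd u k j).
Proof.
apply/idP/eqP => [/andP[/forallP H /eqP Hk]|->].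
  apply/ffunP => l; rewrite ffunE; case: eqP => [->//|/eqP lk].
  by move: (H l); rewrite lk /= eq_sym => /eqP.
apply/andP; split; last by rewrite ffunE eqxx.
apply/forallP => l; apply/implyP => lk.
by rewrite ffunE (negbTE lk).
Qed.

Lemma Kw_delta_mul i j (N : endo d) u w :
  Kw (rho d (delta_mx i j) * N) u w = \sum_(k < d) (u k == i)%:R * Kw N (upd u k j) w.
Proof.
rewrite Kw_mul.
under eq_bigr do rewrite Kw_rho big_distrl /=.
rewrite exchange_big /=; apply: eq_bigr => k _.
rewrite -[RHS](sum_delta (upd u k j) (fun v => (u k == i)%:R * Kw N v w)).
apply: eq_bigr => v _; rewrite -agree_upd mxE.
by case: (u k == i); case: (v k == j); rewrite /= ?andbT ?andbF ?mul0r ?mul1r ?mulr0 ?mulr1.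
Qed.

Lemma S_inj j (u w : W) : S j u = S j w -> u = w.
Proof.
move=> H; apply/ffunP => k.
have: (k \in S j u) = (k \in S j w) by rewrite H.
rewrite !inE; clear H.
move: (u k) (w k) j => [[|[|]]] // ? [[|[|]]] // ? [[|[|]]] // ? /= _; exact: val_inj.
Qed.


Lemma S_upd (u : W) k i j : i != j -> u k == i -> S j (upd u k j) = k |: S j u.
Proof.
move=> ij /eqP uk; apply/setP => l; rewrite !inE ffunE.
have [->|lk] := eqVneq l k; first by rewrite eqxx uk (negbTE ij).
by [].
Qed.

Lemma notin_S (u : W) k i j : i != j -> u k == i -> k \notin S j u.
Proof. by move=> ij /eqP uk; rewrite inE uk. Qed.

Lemma Kw_pow i j n u w : i != j ->
  Kw (rho d (delta_mx i j) ^+ n) u w =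
  n`!%:R * ((S j u \subset S j w) && (#|S j w| == #|S j u| + n)%N)%:R.
Proof.
move=> ij; elim: n u => [|n IH] u.
  rewrite expr0 Kw1 mul1r addn0; congr (_%:R); congr nat_of_bool.
  apply/idP/andP => [/eqP->|[H1 H2]]; first by rewrite subxx.
  apply/eqP; apply: (@S_inj j); apply/eqP; by rewrite eqEcard H1 (eqP H2) leqnn.
rewrite exprS Kw_delta_mul.
under eq_bigr => k _.
  have -> : (u k == i)%:R * Kw (rho d (delta_mx i j) ^+ n) (upd u k j) w =
     ((u k == i) && (w k == j))%:R *
     (n`!%:R * ((S j u \subset S j w) && (#|S j w| == #|S j u| + n.+1)%N)%:R).
    case uki: (u k == i); last by rewrite !mul0r.
    rewrite IH (S_upd ij uki) cardsU1 (notin_S ij uki) /= mul1r.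
    rewrite subUset sub1set inE addnS -addSn add1n; by case: (w k == j); rewrite /= ?mul0r ?mulr0 ?mul1r.
  over.
rewrite -big_distrl /= -natr_sum.
have -> : (\sum_k ((u k == i) && (w k == j)) : nat)%N = #|S j w :\: S j u|.
  rewrite -sum1_card [RHS]big_mkcond /=; apply: eq_bigr => k _.
  by rewrite !inE (I2_neq _ ij) andbC.
case: andP => [[H1 /eqP H2]|_]; last by rewrite !mulr0.
rewrite cardsD (setIidPr H1) H2 addKn factS natrM mulr1 mulr1 mulrC.
by [].
Qed.

Lemma Kw_scale (a : rat) M u w : Kw (a *: M) u w = a * Kw M u w.
Proof. by rewrite /Kw mxE. Qed.

Lemma Kw_divpow i j n u w : i != j ->
  Kw (divpow (rho d (delta_mx i j)) n) u w =
  ((S j u \subset S j w) && (#|S j w| == #|S j u| + n)%N)%:R.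
Proof.
move=> ij; rewrite /divpow Kw_scale Kw_pow // mulrA mulVf ?mul1r //.
by rewrite pnatr_eq0 -lt0n fact_gt0.
Qed.

Definition isdiag (M : endo d) (f : W -> rat) := forall u w, Kw M u w = (u == w)%:R * f u.

Lemma diag_mull M f N u w : isdiag M f -> Kw (M * N) u w = f u * Kw N u w.
Proof.
move=> HM; rewrite Kw_mul.
rewrite -[RHS](sum_delta u (fun v => f u * Kw N v w)).
by apply: eq_bigr => v _; rewrite HM eq_sym; case: eqP => [->|]; rewrite ?mul1r ?mul0r.
Qed.

Lemma diag_mulr M f N u w : isdiag M f -> Kw (N * M) u w = Kw N u w * f w.
Proof.
move=> HM; rewrite Kw_mul.
rewrite -[RHS](sum_delta w (fun v => Kw N u v * f v)).
apply: eq_bigr => v _; rewrite HM; case: eqP => [->|]; rewrite ?mul1r ?mul0r ?mulr0 //.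
Qed.

Lemma Kw_sub M N u w : Kw (M - N) u w = Kw M u w - Kw N u w.
Proof. by rewrite /Kw !mxE. Qed.

Lemma Kw_nat (i : nat) u w : Kw i%:R u w = (u == w)%:R * i%:R.
Proof. by rewrite /Kw mulmxnE -/(Kw 1 u w) Kw1 mulr_natr. Qed.

Lemma diag_H x : isdiag (rho d (delta_mx x x)) (fun u => #|S x u|%:R).
Proof.
move=> u w; rewrite Kw_rho.
have [<-|uw] := eqVneq u w.
  rewrite mul1r -sum1_card natr_sum [RHS]big_mkcond /=; apply: eq_bigr => k _.
  rewrite mxE inE andbb.
  have -> : [forall l : 'I_d, (l != k) ==> (u l == u l)] by apply/forallP => l; rewrite eqxx implybT.
  by rewrite mulr1; case: (u k == x).
rewrite mul0r big1 // => k _; rewrite mxE.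
case: (u k =P x) => [uk|]; last by rewrite mul0r.
case: (w k =P x) => [wk|]; last by rewrite mul0r.
case: forallP => [H|]; last by rewrite mulr0.
case/eqP: uw; apply/ffunP => l.
have [->|lk] := eqVneq l k; first by rewrite uk wk.
by move: (H l); rewrite lk => /eqP.
Qed.

Lemma prod_ffact (n b : nat) : \prod_(i < b) (n%:R - i%:R : rat) = (n ^_ b)%:R.
Proof.
elim: b => [|b IH]; first by rewrite big_ord0 ffactn0.
rewrite big_ord_recr /= IH ffactnSr.
have [bn|nb] := leqP b n; first by rewrite natrM natrB.
by rewrite ffact_small // !mul0r.
Qed.

Lemma diag_binom x b : isdiag (binomT (rho d (delta_mx x x)) b) (fun u => 'C(#|S x u|, b)%:R).
Proof.
have HP : isdiag (\prod_(i < b) (rho d (delta_mx x x) - i%:R))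
                 (fun u => \prod_(i < b) (#|S x u|%:R - i%:R)).
  elim: b => [|b IH] u w.
    by rewrite !big_ord0 Kw1 mulr1.
  rewrite big_ord_recr /= (diag_mulr _ _ (f := fun u => #|S x u|%:R - b%:R)).
    by rewrite IH big_ord_recr /= -mulrA; case: eqP => [->|]; rewrite ?mul0r.
  by move=> u' w'; rewrite Kw_sub diag_H Kw_nat mulrBr.
move=> u w; rewrite /binomT Kw_scale HP prod_ffact -bin_ffact natrM.
have hb : (b`!%:R : rat) != 0 by rewrite pnatr_eq0 -lt0n fact_gt0.
by field.
Qed.

Lemma S_compl x y (u : W) : y != x -> S y u = ~: S x u.
Proof. by move=> xy; apply/setP => k; rewrite !inE (I2_neq _ (xy : y != x)). Qed.

Lemma cardS_le j (u : W) : (#|S j u| <= d)%N.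
Proof. by rewrite -[X in (_ <= X)%N]card_ord max_card. Qed.

Definition toW x y (V : {set 'I_d}) : W := [ffun k => if k \in V then x else y].

Lemma toW_S x y (u : W) : x != y -> toW x y (S x u) = u.
Proof.
move=> xy; apply/ffunP => k; rewrite ffunE inE.
case: eqP => [->//|/eqP ne]; apply/esym/eqP; rewrite -(I2_neq _ (_ : y != x)).
by []. by rewrite eq_sym.
Qed.

Lemma S_toW x y V : x != y -> S x (toW x y V) = V.
Proof.
move=> xy; apply/setP => k; rewrite inE ffunE.
by case: (k \in V); rewrite ?eqxx // eq_sym (negbTE xy).
Qed.

Lemma sum_card (T : finType) (A : {pred T}) :
  \sum_(t : T) (t \in A)%:R = (#|A|%:R : rat).
Proof. rewrite -sum1_card natr_sum [RHS]big_mkcond; apply: eq_bigr => t _; by case: (t \in A). Qed.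

Lemma Kw_main x y a b c u w : x != y ->
  Kw (divpow (rho d (delta_mx x y)) a * binomT (rho d (delta_mx x x)) b *
      divpow (rho d (delta_mx y x)) c) u w =
  Gc #|S x u| #|S x w| #|S x u :&: S x w| a b c.
Proof.
move=> xy; have yx : y != x by rewrite eq_sym.
pose F (V : {set 'I_d}) := ((V \subset S x u :&: S x w) && (#|S x u| == #|V| + a)%N
   && (#|S x w| == #|V| + c)%N)%:R * ('C(#|V|, b)%:R : rat).
have E v : Kw (divpow (rho d (delta_mx x y)) a * binomT (rho d (delta_mx x x)) b) u v *
   Kw (divpow (rho d (delta_mx y x)) c) v w = F (S x v).
  rewrite (diag_mulr _ _ _ (diag_binom x b)) (Kw_divpow _ _ _ xy) (Kw_divpow _ _ _ yx) (S_compl u yx) (S_compl v yx).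
  have hC (V : {set 'I_d}) : #|~: V| = (d - #|V|)%N.
    have := cardsC V; rewrite card_ord; lia.
  rewrite setCS /F subsetI !hC.
  have := cardS_le x u; have := cardS_le x v.
  move: #|S x u| #|S x v| => nu nv hv hu.
  have -> : (d - nv == d - nu + a)%N = (nu == nv + a)%N by apply/eqP/eqP; lia.
  case: (S x v \subset S x u); case: (nu == nv + a)%N; case: (S x v \subset S x w);
   case: (#|S x w| == nv + c)%N; by rewrite /= ?mul0r ?mul1r ?mulr1 ?mulr0 ?andbF.
rewrite Kw_mul (eq_bigr _ (fun v _ => E v)).
have -> : \sum_(v : W) F (S x v) = \sum_(V : {set 'I_d}) F V.
  rewrite [RHS](reindex (S x)) //.
  by exists (toW x y) => v _; rewrite ?toW_S ?S_toW.
rewrite /Gc; case: andP => [[ha /eqP hc]|hn]; last first.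
  rewrite big1 // => V _; rewrite /F.
  case: andP => [[/andP[_ /eqP h1] /eqP h2]|]; last by rewrite mul0r.
  by case: hn; split; lia.
rewrite (eq_bigr (fun V => (V \in [set V : {set 'I_d} | (V \subset S x u :&: S x w) & #|V| == #|S x u| - a]%N)%:R * ('C(#|S x u| - a, b)%:R : rat))); last first.
  move=> V _; rewrite /F inE.
  have [e|ne] := eqVneq #|V| (#|S x u| - a)%N.
    by rewrite e hc subnK // !eqxx !andbT.
  rewrite andbF mul0r; case: andP => [[/andP[_ /eqP h1] _]|]; last by rewrite mul0r.
  by case/eqP: ne; lia.
by rewrite -big_distrl /= sum_card cards_draws natrM mulrC.
Qed.

Lemma Kw_ext (M N : endo d) : (forall u w, Kw M u w = Kw N u w) -> M = N.
Proof.
move=> H; apply/matrixP => i j; have := H (@enum_val W predT i) (@enum_val W predT j).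
by rewrite /Kw /er !enum_valK.
Qed.

Lemma Kw_sum I (r : seq I) (P : pred I) (F : I -> endo d) u w :
  Kw (\sum_(i <- r | P i) F i) u w = \sum_(i <- r | P i) Kw (F i) u w.
Proof. by rewrite /Kw summxE. Qed.

Lemma part (x y : 'I_2) a b c : x != y -> (0 < a + b + c - d)%N ->
  divpow (rho d (delta_mx x y)) a * binomT (rho d (delta_mx x x)) b * divpow (rho d (delta_mx y x)) c =
   \sum_((a + b + c - d)%N <= k < (minn a c).+1)
     (((-1) ^+ (k - (a + b + c - d)) * ('C(k.-1, (a + b + c - d).-1))%:R
        * ('C(b + k, k))%:R : rat)
      *: (divpow (rho d (delta_mx x y)) (a - k) * binomT (rho d (delta_mx x x)) (b + k)
          * divpow (rho d (delta_mx y x)) (c - k))).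
Proof.
move=> xy hs; apply: Kw_ext => u w.
rewrite Kw_main // Kw_sum.
under eq_bigr do rewrite Kw_scale Kw_main //.
apply: arith => //.
- exact/subset_leq_card/subsetIl.
- exact/subset_leq_card/subsetIr.
- rewrite -cardsUI leq_add2r.
  by rewrite -[X in (_ <= X)%N]card_ord max_card.
Qed.
End S.


Theorem theorem2p5 (d a b c : nat) :
  (0 < a + b + c - d)%N ->
  (divpow (fop d) a * binomT (H2op d) b * divpow (eop d) c =
   \sum_((a + b + c - d)%N <= k < (minn a c).+1)
     (((-1) ^+ (k - (a + b + c - d)) * ('C(k.-1, (a + b + c - d).-1))%:R
        * ('C(b + k, k))%:R : rat)
      *: (divpow (fop d) (a - k) * binomT (H2op d) (b + k) * divpow (eop d) (c - k))))
  /\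
  (divpow (eop d) a * binomT (H1op d) b * divpow (fop d) c =
   \sum_((a + b + c - d)%N <= k < (minn a c).+1)
     (((-1) ^+ (k - (a + b + c - d)) * ('C(k.-1, (a + b + c - d).-1))%:R
        * ('C(b + k, k))%:R : rat)
      *: (divpow (eop d) (a - k) * binomT (H1op d) (b + k) * divpow (fop d) (c - k)))).
Proof.
move=> hs; split.
  by apply: (@part d 1 0).
by apply: (@part d 0 1).
Qed.
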